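(* Let $n\ge 2$ and let $p=(p_1,\dots,p_n)$ be a vector with all $p_i>0$. For $q\in \mathrm{Sim}_n(1)$ define $$OD(q,p)=\sum_{1\le i\le n}\Big((1-q_i)\log(1-q_i) - q_i\log\frac{q_i}{p_i}\Big).$$ (1) For an index $j$, $\max_{q\in\mathrm{Sim}_n(1)} OD(q,p)=\log(p_j)$ if and only if $p_j\ge\sum_{i\ne j}p_i$ (such $j$ is called dominant). If $n\ge 3$ there is at most one dominant index. If there is no dominant index, the maximum of $OD(\cdot,p)$ over $\mathrm{Sim}_n(1)$ is attained in the interior of the simplex. (2) If $p_i=c>0$ for all $i$, then $$\max_{q\in\mathrm{Sim}_n(1)} OD(q,p)=OD\!\left(\tfrac{e}{n},p\right)=(n-1)\log(1-n^{-1})+\log n+\log c.$$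
   Context: $\mathrm{Sim}_n(1)=\{(q_1,\dots,q_n): q_i\ge 0,\ \sum_i q_i=1\}$; $e=(1,\dots,1)$, so $e/n$ is the uniform vector. Conventions: $0\log 0=0$ (i.e. $0^0=1$). *)

(* Defs.v *)
From HB Require Import structures.
From mathcomp Require Import all_boot all_order all_algebra.
From mathcomp Require Import all_classical all_reals all_analysis.
Set Implicit Arguments. Unset Strict Implicit. Unset Printing Implicit Defensive.
Import Order.TTheory GRing.Theory Num.Theory.
Local Open Scope ring_scope.

Section OD.
Variables (R : realType) (n : nat).

Definition Sim (q : 'I_n -> R) : Prop :=
  (forall i, 0 <= q i) /\ \sum_(i < n) q i = 1.

Definition xlnx (x : R) : R := if x == 0 then 0 else x * ln x.

Definition xlnxdiv (x y : R) : R := if x == 0 then 0 else x * ln (x / y).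

Definition OD (q p : 'I_n -> R) : R :=
  \sum_(i < n) (xlnx (1 - q i) - xlnxdiv (q i) (p i)).

Definition is_maximizer (p q : 'I_n -> R) : Prop :=
  Sim q /\ forall q', Sim q' -> OD q' p <= OD q p.

Definition is_max_value (p : 'I_n -> R) (M : R) : Prop :=
  (exists q, Sim q /\ OD q p = M) /\ (forall q, Sim q -> OD q p <= M).

Definition dominant (p : 'I_n -> R) (j : 'I_n) : Prop :=
  \sum_(i < n | i != j) p i <= p j.

End OD.

(* Main.v *)
Require Import Defs.
From HB Require Import structures.
From mathcomp Require Import all_boot all_order all_algebra.
From mathcomp Require Import all_classical all_reals all_analysis.
From mathcomp Require Import lra ring.
Import Order.TTheory GRing.Theory Num.Theory.
Local Open Scope ring_scope.

Section Elem.
Variable R : realType.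
Implicit Types x y b z : R.

Lemma xlnxE x : xlnx x = x * ln x.
Proof. by rewrite /xlnx; case: eqP => [->|]; rewrite ?mul0r. Qed.

Lemma xlnxdivE x y : xlnxdiv x y = x * ln (x / y).
Proof. by rewrite /xlnxdiv; case: eqP => [->|]; rewrite ?mul0r. Qed.

Lemma ln_le z : 0 < z -> ln z <= z - 1.
Proof.
move=> z0; have := @le_ln1Dx R (z - 1).
rewrite (_ : 1 + (z - 1) = z); last by ring.
by apply; lra.
Qed.

Lemma ln_ge z : 0 < z -> 1 - z^-1 <= ln z.
Proof.
move=> z0; have := @ln_le (z^-1); rewrite invr_gt0 => /(_ z0).
by rewrite lnV ?posrE //; lra.
Qed.

Lemma kl_lb y b : 0 <= y -> 0 < b -> y - b <= y * ln (y / b).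
Proof.
move=> y0 b0; have [->|yp] := eqVneq y 0; first by rewrite mul0r; lra.
have ypos : 0 < y by rewrite lt_def yp y0.
have := @ln_ge (y / b) (divr_gt0 ypos b0); rewrite invf_div => h.
have := ler_wpM2l y0 h; rewrite mulrBr mulr1 mulrCA divff ?gt_eqF // mulr1; exact.
Qed.

Lemma kl_ub y b : 0 <= y -> 0 < b -> y * ln (y / b) <= (y - b) * y / b.
Proof.
move=> y0 b0; have [->|yp] := eqVneq y 0; first by rewrite !(mul0r, mulr0).
have ypos : 0 < y by rewrite lt_def yp y0.
have h := @ln_le (y / b) (divr_gt0 ypos b0).
have := ler_wpM2l y0 h => h2; apply: (le_trans h2).
rewrite (_ : y * (y / b - 1) = (y - b) * y / b) //.
field; exact: lt0r_neq0.
Qed.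

Lemma lnsplit y b : 0 <= y -> 0 < b -> y * ln y = y * ln b + y * ln (y / b).
Proof.
move=> y0 b0; have [->|yp] := eqVneq y 0; first by rewrite !mul0r addr0.
have ypos : 0 < y by rewrite lt_def yp y0.
by rewrite ln_div ?posrE //; ring.
Qed.

Lemma Y_tan y b : 0 <= y -> 0 < b ->
  b * ln b + (1 + ln b) * (y - b) <= y * ln y.
Proof.
move=> y0 b0; rewrite (@lnsplit y b y0 b0); have := @kl_lb y b y0 b0; nra.
Qed.

Lemma Y_tan2 y b : 0 <= y -> 0 < b ->
  y * ln y <= b * ln b + (1 + ln b) * (y - b) + (y - b) ^+ 2 / b.
Proof.
move=> y0 b0; rewrite (@lnsplit y b y0 b0); have := @kl_ub y b y0 b0.
have -> : (y - b) * y / b = (y - b) + (y - b) ^+ 2 / b.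
  by field; rewrite gt_eqF.
nra.
Qed.

End Elem.


Section Main.
Variable R : realType.

Definition phi (c x : R) := (1 - x) * ln (1 - x) - x * ln (x / c).

Lemma ODE n (q p : 'I_n -> R) : OD q p = \sum_(i < n) phi (p i) (q i).
Proof. by apply: eq_bigr => i _; rewrite xlnxE xlnxdivE. Qed.

Lemma chord (x s : R) : 0 <= x -> x <= s -> s <= 1 ->
  s * ((1 - x) * ln (1 - x)) <= x * ((1 - s) * ln (1 - s)).
Proof.
move=> x0 xs s1.
have [x1|x1] := eqVneq x 1.
  have s1' : s = 1 by lra.
  by rewrite x1 s1'.
have a0 : 0 < 1 - x by rewrite subr_gt0 lt_neqAle x1 /=; lra.
have h1 := @Y_tan R 1 (1 - x) ler01 a0.
have h2 := @Y_tan R (1 - s) (1 - x) (ltac:(lra)) a0.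
rewrite ln1 mulr0 in h1.
have sx : 0 <= s - x by lra.
have := ler_wpM2l sx h1; have := ler_wpM2l x0 h2.
nra.
Qed.

Lemma sum_le_sum_restr n (q : 'I_n -> R) (j i : 'I_n) :
  (forall k, 0 <= q k) -> i != j -> q i <= \sum_(k < n | k != j) q k.
Proof.
move=> q0 ij; rewrite (bigD1 i) //=.
by rewrite lerDl sumr_ge0.
Qed.

Lemma dom_bound n (p q : 'I_n -> R) (j : 'I_n) : (2 <= n)%N ->
  (forall i, 0 < p i) -> dominant p j -> Sim q -> OD q p <= ln (p j).
Proof.
move=> n2 hp dom [q0 q1].
set s := \sum_(i < n | i != j) q i.
set P := \sum_(i < n | i != j) p i.
have qj : q j = 1 - s by rewrite -q1 (bigD1 j) //= -/s; ring.
have s0 : 0 <= s by rewrite sumr_ge0.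
have s1 : s <= 1 by rewrite -q1 (bigD1 j) //= -/s lerDr.
have [k kj] : exists k : 'I_n, k != j.
  have n1 : (1 < n)%N by [].
  have n0 : (0 < n)%N by apply: ltn_trans n1.
  case: (eqVneq (val j) 0%N) => e.
    by exists (Ordinal n1); rewrite -val_eqE /= e.
  by exists (Ordinal n0); rewrite -val_eqE /= eq_sym.
have P0 : 0 < P by rewrite /P (bigD1 k) //= ltr_pwDl // sumr_ge0 // => i _; apply: ltW.
have A : s * ln s - s * ln P <= \sum_(i < n | i != j) q i * ln (q i / p i).
  have [sz|sp] := eqVneq s 0.
    rewrite sz !mul0r subr0; apply: sumr_ge0 => i ij.
    have : q i <= 0 by rewrite -sz; apply: sum_le_sum_restr.
    move=> h; have -> : q i = 0 by apply/eqP; rewrite eq_le h q0.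
    by rewrite mul0r.
  have spos : 0 < s by rewrite lt_def sp s0.
  have e : s * ln s - s * ln P = s * ln (s / P).
    by rewrite (@lnsplit R s P s0 P0); ring.
  rewrite e.
  have step : forall i, i != j ->
      q i * ln (s / P) + q i - p i * s / P <= q i * ln (q i / p i).
    move=> i ij.
    have b0 : 0 < p i * s / P by rewrite !mulr_gt0 // invr_gt0.
    have := @kl_lb R (q i) (p i * s / P) (q0 i) b0.
    have [qz|qp] := eqVneq (q i) 0.
      by rewrite qz !mul0r; lra.
    have qpos : 0 < q i by rewrite lt_def qp q0.
    have -> : q i / (p i * s / P) = (q i / p i) / (s / P).
      by field; rewrite !gt_eqF.
    rewrite ln_div ?posrE ?divr_gt0 //; lra.
  have h : \sum_(i < n | i != j) (q i * ln (s / P) + q i - p i * s / P)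
      <= \sum_(i < n | i != j) q i * ln (q i / p i) by apply: ler_sum.
  apply: le_trans h; rewrite big_split /= big_split /= -mulr_suml -/s.
  rewrite sumrN -!mulr_suml -/P -/s.
  have -> : P * s / P = s by field; rewrite gt_eqF.
  lra.
have B : \sum_(i < n | i != j) (1 - q i) * ln (1 - q i) <= (1 - s) * ln (1 - s).
  have [sz|sp] := eqVneq s 0.
    rewrite sz subr0 ln1 mulr0; apply: sumr_le0 => i ij.
    have : q i <= 0 by rewrite -sz; apply: sum_le_sum_restr.
    move=> h; have -> : q i = 0 by apply/eqP; rewrite eq_le h q0.
    by rewrite subr0 ln1 mulr0.
  have spos : 0 < s by rewrite lt_def sp s0.
  rewrite -(ler_pM2l spos) mulr_sumr.
  have : \sum_(i < n | i != j) s * ((1 - q i) * ln (1 - q i))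
         <= \sum_(i < n | i != j) q i * ((1 - s) * ln (1 - s)).
    apply: ler_sum => i ij; apply: chord => //; last exact: sum_le_sum_restr.
  by rewrite -mulr_suml -/s.
rewrite ODE (bigD1 j) //= /phi qj.
have -> : 1 - (1 - s) = s by ring.
rewrite big_split /= sumrN.
have split1 := @lnsplit R (1 - s) (p j) (ltac:(lra)) (hp j).
have lnPj : ln P <= ln (p j) by rewrite ler_ln ?posrE.
have := ler_wpM2l s0 lnPj.
lra.
Qed.

End Main.

Arguments phi {R}.
Arguments ODE {R n}.

Section Vert.
Variable R : realType.

Definition vtx {n} (j : 'I_n) : 'I_n -> R := fun i => if i == j then 1 else 0.

Lemma Sim_vtx n (j : 'I_n) : Sim (vtx j).
Proof.
split; first by move=> i; rewrite /vtx; case: eqP.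
rewrite (bigD1 j) //= /vtx eqxx big1 ?addr0 // => i /negbTE -> //.
Qed.

Lemma OD_vtx n (p : 'I_n -> R) (j : 'I_n) : 0 < p j -> OD (vtx j) p = ln (p j).
Proof.
move=> pj.
rewrite ODE (bigD1 j) //= /phi /vtx eqxx big1.
  by rewrite subrr mul0r mul1r ln_div ?posrE // ln1; ring.
move=> i /negbTE ->; rewrite subr0 ln1 mulr0 mul0r; ring.
Qed.


Lemma vtx_improve n (p : 'I_n -> R) (j : 'I_n) :
  (forall i, 0 < p i) -> ~ dominant p j ->
  exists q, Sim q /\ ln (p j) < OD q p.
Proof.
move=> hp ndom.
set P := \sum_(i < n | i != j) p i.
have Pj : p j < P by rewrite ltNge; apply/negP.
have P0 : 0 < P by apply: lt_trans Pj.
set L := ln P - ln (p j).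
have L0 : 0 < L by rewrite /L subr_gt0 ltr_ln ?posrE.
set t := L / (L + 2).
have t0 : 0 < t by rewrite divr_gt0 //; lra.
have tL : t < L.
  rewrite /t ltr_pdivrMr; last lra.
  nra.
have t1 : t < 1 by rewrite /t ltr_pdivrMr; lra.
have pleP : forall i, i != j -> p i <= P.
  by move=> i ij; apply: sum_le_sum_restr => // k; apply: ltW.
pose q := fun i => if i == j then 1 - t else t * p i / P.
have qo : forall i, i != j -> q i = t * p i / P by move=> i /negbTE; rewrite /q => ->.
have qoge : forall i, i != j -> 0 <= q i /\ q i <= t.
  move=> i ij; rewrite qo //; split; first by apply: divr_ge0; [apply: mulr_ge0; apply: ltW|apply: ltW].
  rewrite -mulrA ger_pMr // ler_pdivrMr // mul1r; exact: pleP.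
have sumo : \sum_(i < n | i != j) q i = t.
  rewrite (eq_bigr (fun i => t / P * p i)); last first.
    by move=> i ij; rewrite qo //; field; rewrite gt_eqF.
  by rewrite -mulr_sumr -/P; field; rewrite gt_eqF.
exists q; split.
  split.
    move=> i; case: (eqVneq i j) => [->|ij]; first by rewrite /q eqxx; lra.
    by case: (qoge i ij).
  by rewrite (bigD1 j) //= sumo /q eqxx; ring.
rewrite ODE (bigD1 j) //= {1}/q eqxx /phi.
have -> : 1 - (1 - t) = t by ring.
have others : - t - t * ln (t / P) <=
    \sum_(i < n | i != j) ((1 - q i) * ln (1 - q i) - q i * ln (q i / p i)).
  have h : \sum_(i < n | i != j) (- q i - q i * ln (t / P)) <=
    \sum_(i < n | i != j) ((1 - q i) * ln (1 - q i) - q i * ln (q i / p i)).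
    apply: ler_sum => i ij.
    have [qi0 qit] := qoge i ij.
    have y0 : 0 <= 1 - q i by lra.
    have := @kl_lb R (1 - q i) 1 y0 ltr01; rewrite divr1.
    have -> : q i / p i = t / P by rewrite qo //; field; rewrite !gt_eqF.
    lra.
  apply: le_trans h; rewrite big_split /= !sumrN -mulr_suml sumo; lra.
have e1 := @lnsplit R t P (ltW t0) P0.
have e2 := @lnsplit R (1 - t) (p j) (ltac:(lra)) (hp j).
have e3 : ln (1 - t) <= - t.
  have := @ln_le R (1 - t) (ltac:(lra)); lra.
have e4 := ler_wpM2l (ltac:(lra) : 0 <= 1 - t) e3.
have e5 : t * t < t * L by rewrite ltr_pM2l.
rewrite /L in e5.
lra.
Qed.

End Vert.


Section Move.
Variable R : realType.

Definition mv {n} (q : 'I_n -> R) (i m : 'I_n) (t : R) : 'I_n -> R :=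
  fun k => q k + (if k == i then t else 0) - (if k == m then t else 0).

Lemma mv_i n (q : 'I_n -> R) i m t : i != m -> mv q i m t i = q i + t.
Proof. by move=> /negbTE im; rewrite /mv eqxx im subr0. Qed.

Lemma mv_m n (q : 'I_n -> R) i m t : i != m -> mv q i m t m = q m - t.
Proof. by move=> im; rewrite /mv eqxx eq_sym (negbTE im) addr0. Qed.

Lemma mv_o n (q : 'I_n -> R) i m t k : k != i -> k != m -> mv q i m t k = q k.
Proof. by move=> /negbTE ki /negbTE km; rewrite /mv ki km addr0 subr0. Qed.

Lemma Sim_mv n (q : 'I_n -> R) i m t : i != m -> Sim q ->
  0 <= q i + t -> 0 <= q m - t -> Sim (mv q i m t).
Proof.
move=> im [q0 q1] h1 h2; split.
  move=> k; case: (eqVneq k i) => [->|ki]; first by rewrite mv_i.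
  case: (eqVneq k m) => [->|km]; first by rewrite mv_m.
  by rewrite mv_o.
rewrite /mv sumrB big_split /= q1.
rewrite (bigD1 i) //= eqxx big1 ?addr0; last by move=> k /negbTE ->.
rewrite (bigD1 m) //= eqxx big1 ?addr0; last by move=> k /negbTE ->.
ring.
Qed.

Lemma OD_mv n (q p : 'I_n -> R) i m t : i != m ->
  OD (mv q i m t) p - OD q p =
  (phi (p i) (q i + t) - phi (p i) (q i)) + (phi (p m) (q m - t) - phi (p m) (q m)).
Proof.
move=> im; rewrite !ODE -sumrB (bigD1 i) //= (bigD1 m) 1?eq_sym //=.
rewrite mv_i // mv_m // big1 ?addr0 // => k /andP [ki km].
by rewrite mv_o // subrr.
Qed.

Lemma phi_inc0 (c t : R) : 0 < c -> 0 <= t -> t <= 1 ->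
  - t - t * ln t + t * ln c <= phi c t - phi c 0.
Proof.
move=> c0 t0 t1; rewrite /phi subr0 ln1 mulr0 mul0r subr0.
have := @kl_lb R (1 - t) 1 (ltac:(lra)) ltr01; rewrite divr1.
have := @lnsplit R t c t0 c0.
lra.
Qed.

Definition dd (c x : R) := ln c - 2 - ln x - ln (1 - x).

Lemma phi_B3 (c x u : R) : 0 < c -> 0 < x -> x < 1 -> 0 <= x + u -> x + u <= 1 ->
  u * dd c x - u ^+ 2 / x <= phi c (x + u) - phi c x.
Proof.
move=> c0 x0 x1 h1 h2.
have ex : forall y, 0 <= y -> y * ln (y / c) = y * ln y - y * ln c.
  by move=> y y0; rewrite (@lnsplit R y c y0 c0); ring.
rewrite /phi !ex //; last exact: ltW.
have t1 := @Y_tan R (1 - (x + u)) (1 - x) (ltac:(lra)) (ltac:(lra)).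
have t2 := @Y_tan2 R (x + u) x h1 x0.
rewrite (_ : x + u - x = u) in t2; last by ring.
rewrite (_ : 1 - (x + u) - (1 - x) = - u) in t1; last by ring.
rewrite /dd; lra.
Qed.

End Move.

Arguments mv {R n}.
Arguments dd {R}.

Section Crit.
Variable R : realType.

Lemma bdry n (p q : 'I_n -> R) (k i : 'I_n) : (forall j, 0 < p j) -> Sim q ->
  (forall q', Sim q' -> OD q' p <= OD q p) -> q k = 0 -> 0 < q i -> q i < 1 -> False.
Proof.
move=> hp Sq mx qk qi0 qi1.
have ki : k != i by apply/eqP => e; move: qi0; rewrite -e qk ltxx.
set x := q i in qi0 qi1 *.
set K := ln (p k) - 1 - dd (p i) x.
set t := Num.min x (expR (K - 2)).
have t0 : 0 < t by rewrite lt_min qi0 expR_gt0.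
have tx : t <= x by rewrite ge_min lexx.
have te : t <= expR (K - 2) by rewrite ge_min lexx orbT.
have lnt : ln t <= K - 2.
  by rewrite -(expRK (K - 2)) ler_ln ?posrE ?expR_gt0.
have Sq' : Sim (mv q k i t) by apply: Sim_mv => //; [rewrite qk; lra | rewrite -/x; lra].
have := mx _ Sq'; rewrite -subr_le0 OD_mv // qk.
have h1 := @phi_inc0 R (p k) t (hp k) (ltW t0) (ltac:(lra)).
have h2 := @phi_B3 R (p i) x (- t) (hp i) qi0 qi1 (ltac:(lra)) (ltac:(lra)).
rewrite add0r.
have w : t ^+ 2 / x = t * (t / x) by rewrite expr2 mulrA.
have w1 : t / x <= 1 by rewrite ler_pdivrMr // mul1r.
have w0 : 0 <= t / x by rewrite divr_ge0 // ltW.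
rewrite sqrrN w in h2.
have := ler_wpM2l (ltW t0) lnt.
have := ler_wpM2l (ltW t0) w1.
rewrite /K in lnt *.
rewrite (_ : x - t = x + - t); last by [].
nra.
Qed.

Lemma stat n (p q : 'I_n -> R) (i m : 'I_n) : (forall j, 0 < p j) -> Sim q ->
  (forall q', Sim q' -> OD q' p <= OD q p) -> 0 < q i -> 0 < q m ->
  q i < 1 -> q m < 1 -> i != m -> dd (p i) (q i) <= dd (p m) (q m).
Proof.
move=> hp Sq mx xi0 ym0 xi1 ym1 im.
set x := q i in xi0 xi1 *; set y := q m in ym0 ym1 *.
rewrite leNgt; apply/negP => D0.
set D := dd (p i) x - dd (p m) y.
have Dp : 0 < D by rewrite /D subr_gt0.
set C := x^-1 + y^-1.
have Cp : 0 < C by rewrite /C addr_gt0 ?invr_gt0.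
set u := Num.min (Num.min y (1 - x)) (D / (2 * C)).
have u0 : 0 < u by rewrite !lt_min ym0 subr_gt0 xi1 divr_gt0 // mulr_gt0.
have uy : u <= y by rewrite !ge_min lexx.
have ux : u <= 1 - x by rewrite !ge_min lexx orbT.
have uC : u <= D / (2 * C) by rewrite ge_min lexx orbT.
have uC' : u * C <= D / 2.
  by move: uC; rewrite ler_pdivlMr ?mulr_gt0 // => h; lra.
have Sq' : Sim (mv q i m u) by apply: Sim_mv => //; rewrite -/x -/y; lra.
have := mx _ Sq'; rewrite -subr_le0 OD_mv // -/x -/y.
have h1 := @phi_B3 R (p i) x u (hp i) xi0 xi1 (ltac:(lra)) (ltac:(lra)).
have h2 := @phi_B3 R (p m) y (- u) (hp m) ym0 ym1 (ltac:(lra)) (ltac:(lra)).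
rewrite sqrrN in h2.
have e : u ^+ 2 / x + u ^+ 2 / y = u * (u * C) by rewrite /C; field; rewrite !gt_eqF.
have := ler_wpM2l (ltW u0) uC'.
rewrite /D in uC'.
nra.
Qed.

End Crit.


Section Cont.
Variable R : realType.
Import numFieldNormedType.Exports.

Lemma Ycont : continuous (fun y : R => y * ln y).
Proof.
move=> y; case: (ltP 0 y) => [y0|y0].
  exact: (continuousM (@cvg_id _ _) (continuous_ln y0)).
apply/cvgrPdist_lt => e e0.
rewrite (ln0 y0) mulr0.
case: (ltgtP y 0) => [yn|yp|yz]; last first.
  have d0 : 0 < Num.min 1 ((e / 2) ^+ 2).
    by rewrite lt_min ltr01 exprn_gt0 // divr_gt0.
  apply/nbhs_ballP; exists (Num.min 1 ((e / 2) ^+ 2)) => // z /=.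
  rewrite /ball /= yz sub0r normrN lt_min => /andP [z1 ze].
  case: (ltP 0 z) => [zp|zn]; last by rewrite (ln0 zn) mulr0 subr0 normr0.
  move: z1 ze; rewrite gtr0_norm // => z1 ze.
  have lz : ln z < 0 by rewrite ln_lt0 // zp z1.
  rewrite sub0r normrN ltr0_norm; last by rewrite pmulr_rlt0.
  set s := Num.sqrt z.
  have s0 : 0 < s by rewrite sqrtr_gt0.
  have ss : s ^+ 2 = z by rewrite sqr_sqrtr // ltW.
  have lnz : ln z = ln s + ln s by rewrite -ss expr2 lnM ?posrE.
  have := @ln_ge R s s0.
  have es : s < e / 2.
    rewrite -ss in ze; rewrite -(@ltr_pXn2r _ 2) ?nnegrE ?(ltW s0) //.
    by rewrite ltW // divr_gt0.
  rewrite lnz -ss => h.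
  have h2 : s ^+ 2 * (1 - s^-1) = s ^+ 2 - s by field; rewrite gt_eqF.
  have := ler_wpM2l (ltW (exprn_gt0 2 s0)) h; rewrite h2 => h3.
  rewrite expr2 in h3 *; nra.
  by move: y0; rewrite leNgt yp.
apply/nbhs_ballP; exists (- y); first by rewrite /= oppr_gt0.
move=> z /=; rewrite /ball /= ltr_norml => /andP [h1 h2].
have zn : z <= 0 by lra.
by rewrite (ln0 zn) mulr0 subr0 normr0.
Qed.


Lemma phi_cont (c : R) : 0 < c -> continuous (phi c).
Proof.
move=> c0 x.
have e : phi c = (fun x => (fun y => y * ln y) ((fun x => 1 - x) x)
                 - c * (fun y => y * ln y) ((fun x => x / c) x)).
  apply/funext => z; rewrite /phi /=; congr (_ - _).
  by field; rewrite gt_eqF.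
rewrite e.
have hf : {for x, continuous (fun z : R => 1 - z)}.
  exact: (continuousB (cvg_cst (1 : R)) cvg_id).
have hA := continuous_comp hf (Ycont _).
have hg : {for x, continuous (fun z : R => z / c)}.
  exact: (continuousM cvg_id (cvg_cst (c^-1 : R))).
have hB0 := continuous_comp hg (Ycont _).
have hB : {for x, continuous (fun z : R => c * (fun y => y * ln y) ((fun x => x / c) z))}.
  exact: (continuousM (cvg_cst c) hB0).
exact: (continuousB hA hB).
Qed.

Lemma F_cont n (p : 'I_n -> R) : (forall i, 0 < p i) ->
  continuous (fun v : 'rV[R]_n => OD (fun i => v ord0 i) p).
Proof.
move=> hp.
have e : (fun v : 'rV[R]_n => OD (fun i => v ord0 i) p)
       = (fun v => \sum_(i <- index_enum 'I_n | true) phi (p i) (v ord0 i)).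
  by apply/funext => v; rewrite ODE.
rewrite e.
have hadd : continuous (fun z : R * R => z.1 + z.2) by exact: add_continuous.
apply: (@continuous_big _ _ +%R 0 (fun _ => true) hadd) => i _ v.
apply: continuous_comp; first exact: coord_continuous.
exact: phi_cont.
Qed.

End Cont.


Section Exist.
Variable R : realType.
Import numFieldNormedType.Exports.
Local Open Scope classical_set_scope.

Lemma exists_max n (p : 'I_n -> R) : (0 < n)%N -> (forall i, 0 < p i) ->
  exists q, Sim q /\ forall q', Sim q' -> OD q' p <= OD q p.
Proof.
move=> n0 hp.
pose A := [set v : 'rV[R]_n | Sim (fun i => v ord0 i)].
pose f := fun v : 'rV[R]_n => OD (fun i => v ord0 i) p.
have rowK : forall q : 'I_n -> R, (fun i => (\row_k q k) ord0 i) = q.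
  by move=> q; apply/funext => i; rewrite mxE.
have A0 : A !=set0.
  by exists (\row_k @vtx R n (Ordinal n0) k); rewrite /A /= rowK; exact: Sim_vtx.
have cA : compact A.
  have Mnco : compact [set v : 'rV[R]_n | forall i, (`[(0:R), 1]%classic) (v ord0 i)].
    have := (@rV_compact R n (fun=> `[0, 1]%classic) (fun=> @segment_compact R 0 1)).
    done.
  apply: (subclosed_compact _ Mnco).
  - have -> : A = (\bigcap_(i in setT) [set v : 'rV[R]_n | 0 <= v ord0 i])
                  `&` [set v : 'rV[R]_n | \sum_(i < n) v ord0 i = 1].
      apply/seteqP; split => v /=.
        by move=> [h1 h2]; split => // i _; exact: h1.
      by move=> [h1 h2]; split => // i; exact: h1.
    apply: closedI.
      apply: closed_bigI => i _.
      apply: (@preimage_closed _ _ (fun v : 'rV[R]_n => v ord0 i) [set x : R | 0 <= x]).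
        by move=> v _; exact: coord_continuous.
      exact: closed_ge.
    apply: (@preimage_closed _ _ (fun v : 'rV[R]_n => \sum_(i < n) v ord0 i) [set x : R | x = 1]).
      move=> v _.
      have hadd : continuous (fun z : R * R => z.1 + z.2) by exact: add_continuous.
      apply: (@continuous_big _ _ +%R 0 (fun _ => true) hadd) => i _ w.
      exact: coord_continuous.
    exact: closed_eq.
  - move=> v [h0 h1] i /=; rewrite in_itv /= h0 /=.
    rewrite -h1 (bigD1 i) //= lerDl; exact: sumr_ge0.
have cf : {within A, continuous f}.
  by apply: continuous_subspaceT; exact: F_cont.
have [c cA' cmax] := EVT_max_rV A0 cA cf.
exists (fun i => c ord0 i); split.
  by move: cA'; rewrite inE.
move=> q' Sq'.
have := cmax (\row_k q' k); rewrite /f rowK; apply.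
by rewrite inE /A /= rowK.
Qed.

End Exist.


Section Fin.
Variable R : realType.

Lemma third n (j k : 'I_n) : (3 <= n)%N -> exists m : 'I_n, (m != j) && (m != k).
Proof.
move=> n3.
have : ~~ ([set: 'I_n] \subset [set j; k]).
  apply/negP => /subset_leq_card; rewrite cardsT card_ord cards2.
  by case: (j != k) => /= h; move: (leq_trans n3 h).
case/subsetPn => m _; rewrite !inE negb_or => h; by exists m.
Qed.

Lemma le_sum2 {n} {q : 'I_n -> R} {i m : 'I_n} : (forall k, 0 <= q k) -> i != m ->
  q i + q m <= \sum_(k < n) q k.
Proof.
move=> q0 im; rewrite (bigD1 i) //= (bigD1 m) //= 1?eq_sym //.
by rewrite addrA lerDl sumr_ge0.
Qed.

Lemma le_sum3 {n} {q : 'I_n -> R} {i m l : 'I_n} : (forall k, 0 <= q k) -> i != m ->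
  l != i -> l != m -> q i + q m + q l <= \sum_(k < n) q k.
Proof.
move=> q0 im li lm; rewrite (bigD1 i) //= (bigD1 m) //= 1?eq_sym //.
rewrite (bigD1 l) /=; last by rewrite li lm.
by rewrite !addrA lerDl sumr_ge0.
Qed.

Lemma le_sum1 {n} {q : 'I_n -> R} (i : 'I_n) : (forall k, 0 <= q k) ->
  q i <= \sum_(k < n) q k.
Proof. by move=> q0; rewrite (bigD1 i) //= lerDl sumr_ge0. Qed.

Lemma sum_other_const n (c : R) (j : 'I_n) :
  \sum_(i < n | i != j) c = c * n%:R - c.
Proof.
have e : \sum_(i < n) c = c *+ n by rewrite sumr_const card_ord.
rewrite (bigD1 j) //= -mulr_natr in e; lra.
Qed.

Lemma pos_of_max n (p q : 'I_n -> R) : (forall i, 0 < p i) ->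
  (forall j, ~ dominant p j) -> is_maximizer p q -> forall i, 0 < q i.
Proof.
move=> hp nd [Sq mx] i.
have [q0 q1] := Sq.
rewrite lt_def q0 andbT; apply/negP => /eqP qi.
case: (pselect (exists j, q j = 1)) => [[j qj]|nq1].
  have qv : q = @vtx R n j.
    apply/funext => k; rewrite /vtx; case: eqP => [->//|/eqP kj].
    have := le_sum2 q0 kj; rewrite q1 qj => h.
    by apply/eqP; rewrite eq_le q0 andbT; lra.
  have [q' [Sq' lt]] := @vtx_improve R n p j hp (nd j).
  have := mx _ Sq'; rewrite qv OD_vtx //; lra.
have ql1 : forall k, q k < 1.
  move=> k; have := le_sum1 k q0; rewrite q1 => h.
  rewrite lt_neqAle h andbT; apply/eqP => e.
  by apply: nq1; exists k.
case: (pselect (exists i', q i' != 0)) => [[i' /eqP qi']|h]; last first.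
  move: q1; rewrite big1 => [/eqP|k _]; first by rewrite eq_sym oner_eq0.
  by case: (eqVneq (q k) 0) => // hk; exfalso; apply: h; exists k.
have qi'p : 0 < q i' by rewrite lt_def q0 andbT; apply/eqP.
exact: (@bdry R n p q i i' hp Sq mx qi qi'p (ql1 i')).
Qed.

End Fin.

Arguments le_sum1 {R n q}.
Arguments le_sum2 {R n q i m}.
Arguments le_sum3 {R n q i m l}.

Theorem fact5p8 (R : realType) (n : nat) (hn : (2 <= n)%N)
  (p : 'I_n -> R) (hp : forall i, 0 < p i) :
  [/\ (forall j : 'I_n, is_max_value p (ln (p j)) <-> dominant p j),
      ((3 <= n)%N -> forall j k : 'I_n, dominant p j -> dominant p k -> j = k),
      ((forall j : 'I_n, ~ dominant p j) ->
         (exists q, is_maximizer p q /\ forall i, 0 < q i) /\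
         (forall q, is_maximizer p q -> forall i, 0 < q i))
    & (forall c : R, 0 < c -> (forall i, p i = c) ->
         is_maximizer p (fun _ => n%:R^-1) /\
         OD (fun _ => n%:R^-1) p
           = (n%:R - 1) * ln (1 - n%:R^-1) + ln n%:R + ln c)].
Proof.
have n0 : (0 < n)%N by apply: leq_trans hn.
have part3 : (forall j : 'I_n, ~ dominant p j) ->
         (exists q, is_maximizer p q /\ forall i, 0 < q i) /\
         (forall q, is_maximizer p q -> forall i, 0 < q i).
  move=> nd; split; last by move=> q; exact: pos_of_max.
  have [q [Sq mx]] := @exists_max R n p n0 hp.
  exists q; split; first by split.
  by apply: pos_of_max => //; split.
split.
- move=> j; split.
    move=> [_ hb]; rewrite /dominant leNgt; apply/negP => h.
    have nd : ~ dominant p j by rewrite /dominant; apply/negP; rewrite -ltNge.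
    have [q [Sq lt]] := @vtx_improve R n p j hp nd.
    have := hb q Sq; lra.
  move=> dom; split.
    by exists (@vtx R n j); split; [exact: Sim_vtx | exact: OD_vtx].
  by move=> q Sq; exact: dom_bound.
- move=> n3 j k dj dk; apply/eqP; apply/negP => jk.
  have [m /andP [mj mk]] := @third n j k n3.
  have kj : k != j by rewrite eq_sym; apply/negP.
  have jk' : j != k by apply/negP.
  have q0 : forall i, 0 <= p i by move=> i; apply: ltW.
  have S1 : p k + p m <= \sum_(i < n | i != j) p i.
    rewrite (bigD1 k) //= (bigD1 m) /=; last by rewrite mj mk.
    by rewrite addrA lerDl sumr_ge0.
  have S2 : p j + p m <= \sum_(i < n | i != k) p i.
    rewrite (bigD1 j) //= (bigD1 m) /=; last by rewrite mj mk.
    by rewrite addrA lerDl sumr_ge0.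
  move: dj dk; rewrite /dominant => dj dk.
  have := hp m; lra.
- exact: part3.
move=> c c0 pc.
have nR : 0 < n%:R :> R by rewrite ltr0n.
have val : OD (fun _ => n%:R^-1) p
    = (n%:R - 1) * ln (1 - n%:R^-1) + ln n%:R + ln c.
  rewrite ODE (eq_bigr (fun _ => phi c n%:R^-1)); last by move=> i _; rewrite pc.
  rewrite sumr_const card_ord /phi.
  set NN := (n%:R : R).
  rewrite -mulr_natr -/NN.
  rewrite ln_div ?posrE ?invr_gt0 // lnV ?posrE //.
  have -> : (1 - NN^-1) * ln (1 - NN^-1) = (NN - 1) * ln (1 - NN^-1) / NN.
    by field; exact: lt0r_neq0.
  by field; exact: lt0r_neq0.
split => //.
have Su : Sim (fun _ : 'I_n => n%:R^-1 : R).
  split; first by move=> i; rewrite invr_ge0 ltW.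
  rewrite sumr_const card_ord; set N2 := (n%:R : R).
  by rewrite -mulr_natr -/N2 mulVf // lt0r_neq0.
split => //.
have sumo : forall j : 'I_n, \sum_(i < n | i != j) p i = c * n%:R - c.
  move=> j; rewrite (eq_bigr (fun _ => c)); last by move=> i _; rewrite pc.
  exact: sum_other_const.
case: (ltngtP n 2) => [|n3|n2]; first by rewrite ltnNge hn.
- (* n >= 3 : interior maximizer is uniform *)
  have nd : forall j : 'I_n, ~ dominant p j.
    move=> j; rewrite /dominant sumo pc; apply/negP; rewrite -ltNge.
    have : 3%:R <= n%:R :> R by rewrite ler_nat.
    nra.
  have [[q [[Sq mx] qpos]] _] := part3 nd.
  have [q0 q1] := Sq.
  have qlt1 : forall i, q i < 1.
    move=> i.
    have [m mi] : exists m : 'I_n, m != i.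
      by have [m /andP [mi _]] := @third n i i n3; exists m.
    have := le_sum2 q0 mi; rewrite q1 => h; have := qpos m; lra.
  have eqq : forall i m, i != m -> q i = q m.
    move=> i m im.
    have h1 := @stat R n p q i m hp Sq mx (qpos i) (qpos m) (qlt1 i) (qlt1 m) im.
    have h2 := @stat R n p q m i hp Sq mx (qpos m) (qpos i) (qlt1 m) (qlt1 i) (ltac:(by rewrite eq_sym)).
    rewrite !pc in h1 h2.
    have e : dd c (q i) = dd c (q m) by apply/eqP; rewrite eq_le h1 h2.
    move: e; rewrite /dd => e.
    have e2 : ln (q i * (1 - q i)) = ln (q m * (1 - q m)).
      rewrite !lnM ?posrE ?subr_gt0 ?qpos ?qlt1 //; lra.
    have e3 : q i * (1 - q i) = q m * (1 - q m).
      by apply: ln_inj => //; rewrite posrE mulr_gt0 ?subr_gt0 ?qpos ?qlt1.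
    have [l /andP [li lm]] := @third n i m n3.
    have := le_sum3 q0 im li lm; rewrite q1 => h.
    have := qpos l.
    nra.
  have qc : forall i, q i = n%:R^-1.
    move=> i.
    have e : \sum_(k < n) q k = q i *+ n.
      rewrite (eq_bigr (fun=> q i)); first by rewrite sumr_const card_ord.
      by move=> k _; case: (eqVneq k i) => [->//|ki]; exact: eqq.
    rewrite q1 -mulr_natr in e.
    by apply: (mulIf (lt0r_neq0 nR)); rewrite mulVf ?gt_eqF.
  have qu : q = (fun _ => n%:R^-1) by apply/funext => i; exact: qc.
  by rewrite -qu.
-
  move=> q Sq.
  rewrite val.
  have dom : dominant p (Ordinal n0).
    by rewrite /dominant sumo pc n2; lra.
  have n2R : (n%:R : R) = 2%:R by rewrite n2.
  have := @dom_bound R n p q (Ordinal n0) hn hp dom Sq; rewrite pc n2R.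
  have -> : 1 - 2%:R^-1 = 2%:R^-1 :> R by field.
  rewrite lnV ?posrE //; lra.
Qed.
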